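(* Let $(X,Y)\sim P_{XY}$ be a pair of random variables on finite alphabets $\mathcal{X}\times\mathcal{Y}$, and let $\varepsilon,\varepsilon_0,\varepsilon_1,\varepsilon_2,\varepsilon_3>0$ with $\varepsilon_0+\varepsilon_1+\varepsilon_2+\varepsilon_3\le\varepsilon$. (Lower bounds.) For every distributed encoding protocol $(e_{\mathcal X},e_{\mathcal Y},U)\in\Lambda_\varepsilon$ with codomains $\mathcal{C}_{\mathcal X},\mathcal{C}_{\mathcal Y}$, $$\log|\mathcal C_{\mathcal X}|\ge H_0^{\varepsilon}(X|Y),\qquad \log|\mathcal C_{\mathcal Y}|\ge H_0^{\varepsilon}(Y|X),\qquad \log|\mathcal C_{\mathcal X}|+\log|\mathcal C_{\mathcal Y}|\ge H_0^{\varepsilon}(X,Y).$$ (Achievability.) Let $\delta\ge 0$ be such that $\Pr\{(X,Y)\notin\mathcal{A}_\delta(P_{XY})\}\le\varepsilon_0$. Then for any finite sets $\mathcal C_{\mathcal X},\mathcal C_{\mathcal Y}$ satisfying $$\log|\mathcal C_{\mathcal X}|\ge \Xi^\delta_{\max}(P_{XY})-\Xi^\delta_{\min}(P_Y)-\log\varepsilon_1,$$ $$\log|\mathcal C_{\mathcal Y}|\ge \Xi^\delta_{\max}(P_{XY})-\Xi^\delta_{\min}(P_X)-\log\varepsilon_2,$$ $$\log|\mathcal C_{\mathcal X}|+\log|\mathcal C_{\mathcal Y}|\ge \Xi^\delta_{\max}(P_{XY})-\log\varepsilon_3,$$ there exists a distributed encoding protocol $(e_{\mathcal X},e_{\mathcal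 Y},U)\in\Lambda_\varepsilon$ with these codomains.
   Context: All logarithms are base 2; all random variables are discrete on finite alphabets. For a random variable $W$ on a finite alphabet $\mathcal W$, $H(W)$ is the Shannon entropy. Smooth entropies: for $\varepsilon\ge0$ and jointly distributed $(X,Y)$, the infima/suprema below range over pairs $(\bar X,\bar Y)$ defined on a common probability space with $(X,Y)$ such that $\Pr[(\bar X,\bar Y)\neq(X,Y)]\le\varepsilon$. $H_0^\varepsilon(X|Y):=\log\big[\inf_{(\bar X,\bar Y)}\max_{y}|\{x:P_{\bar X|\bar Y=y}(x)>0\}|\big]$; the unconditional versions are obtained with $Y$ trivial (constant). In particular $H_0^\varepsilon(X,Y)$ is $H_0^\varepsilon$ of the pair $W=(X,Y)$. $H_\infty^\delta(W):=-\log\big[\inf_{\bar W:\Pr[\bar W\neq W]\le\delta}\max_w P_{\bar W}(w)\big]$. $H_{-\infty}^\delta(W):=-\log\big[\sup_{\bar W:\Pr[\bar W\neq W]\le\delta}\min_{w:P_{\bar W}(w)>0}P_{\bar W}(w)\big]$. For a random variable $W$ on finite alphabet $\mathcal W$ and $\delta\ge0$: $\Xi^\delta_{\min}(P_W):=H(W)-|H(W)-H^\delta_\infty(W)|-\delta\log|\mathcal W|$ and $\Xi^\delta_{\max}(P_W):=H(W)+|H(W)-H^\delta_{-\infty}(W)|+\delta\log|\mathcal W|$ (for $W=(X,Y)$, $\mathcal W=\mathcal X\times\mathcal Y$). $\mathcal A_\delta(P_X):=\{x:\Xi^\delta_{\min}(P_X)\le-\log P_X(x)\le\Xi^\delta_{\max}(P_X)\}$,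 similarly $\mathcal A_\delta(P_Y)$, and $\mathcal A_\delta(P_{XY}):=\{(x,y):\Xi^\delta_{\min}(P_{XY})\le-\log P_{XY}(x,y)\le\Xi^\delta_{\max}(P_{XY}),\ x\in\mathcal A_\delta(P_X),\ y\in\mathcal A_\delta(P_Y)\}$. Distributed encoding protocols: for $0\le\varepsilon\le1$, $\Lambda_\varepsilon=\Lambda^P_\varepsilon(\mathcal X\times\mathcal Y\to\mathcal C_{\mathcal X}\times\mathcal C_{\mathcal Y})$ is the set of triples $(e_{\mathcal X},e_{\mathcal Y},U)$ where $U$ is a random variable with finite range $\mathcal U$, independent of $(X,Y)$ (shared randomness), $e_{\mathcal X}:\mathcal X\times\mathcal U\to\mathcal C_{\mathcal X}$, $e_{\mathcal Y}:\mathcal Y\times\mathcal U\to\mathcal C_{\mathcal Y}$, such that there exists a decoding function $g:\mathcal C_{\mathcal X}\times\mathcal C_{\mathcal Y}\times\mathcal U\to\mathcal X\times\mathcal Y$ with $\Pr\{g(e_{\mathcal X}(X,U),e_{\mathcal Y}(Y,U),U)\neq(X,Y)\}\le\varepsilon$. The encoding lengths are $\log|\mathcal C_{\mathcal X}|$ and $\log|\mathcal C_{\mathcal Y}|$. *)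

(* Defs.v *)
From mathcomp Require Import all_boot.
From Stdlib Require Import Reals ClassicalEpsilon.
Set Implicit Arguments. Unset Strict Implicit. Unset Printing Implicit Defensive.
Open Scope R_scope.

Definition log2 (x : R) : R := ln x / ln 2.

Definition Rleb (x y : R) : bool := if Rle_dec x y then true else false.
Definition Rltb (x y : R) : bool := if Rlt_dec x y then true else false.

Definition is_pmf (T : finType) (P : T -> R) : Prop :=
  (forall t, 0 <= P t) /\ \big[Rplus/0]_(t : T) P t = 1.

Definition is_glb (E : R -> Prop) (m : R) : Prop :=
  (forall x, E x -> m <= x) /\ (forall b, (forall x, E x -> b <= x) -> b <= m).
Definition Rinf (E : R -> Prop) : R := epsilon (inhabits 0) (is_glb E).
Definition Rsup (E : R -> Prop) : R := epsilon (inhabits 0) (is_lub E).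

(* A smoothing of W ~ P: the joint law Q of (W, Wbar) on a common
   probability space (Q (w, w') = Pr[W = w, Wbar = w']), with
   Pr[Wbar <> W] <= d. *)
Definition smoothing (T : finType) (P : T -> R) (d : R) (Q : T * T -> R) : Prop :=
  is_pmf Q /\
  (forall w, \big[Rplus/0]_(w' : T) Q (w, w') = P w) /\
  \big[Rplus/0]_(p : T * T | p.1 != p.2) Q p <= d.

Definition bar_law (T : finType) (Q : T * T -> R) (w' : T) : R :=
  \big[Rplus/0]_(w : T) Q (w, w').

Definition cond_supp_size (A B : finType) (Q : (A * B) * (A * B) -> R) (b : B) : nat :=
  #|[set a : A | Rltb 0 (bar_law Q (a, b))]|.

Definition H0cond (A B : finType) (P : A * B -> R) (eps : R) : R :=
  log2 (Rinf (fun r => exists Q, smoothing P eps Q /\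
                 r = INR (\max_(b : B) cond_supp_size Q b))).

Definition H0 (T : finType) (P : T -> R) (eps : R) : R :=
  log2 (Rinf (fun r => exists Q, smoothing P eps Q /\
                 r = INR #|[set w : T | Rltb 0 (bar_law Q w)]|)).

Definition Hinf (T : finType) (P : T -> R) (d : R) : R :=
  - log2 (Rinf (fun r => exists Q, smoothing P d Q /\
                 r = \big[Rmax/0]_(w : T) bar_law Q w)).

Definition Hminf (T : finType) (P : T -> R) (d : R) : R :=
  - log2 (Rsup (fun r => exists Q, smoothing P d Q /\
                 r = \big[Rmin/1]_(w : T | Rltb 0 (bar_law Q w)) bar_law Q w)).

Definition entropy (T : finType) (P : T -> R) : R :=
  - \big[Rplus/0]_(w : T) (P w * log2 (P w)).

Definition Xi_min (T : finType) (P : T -> R) (d : R) : R :=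
  entropy P - Rabs (entropy P - Hinf P d) - d * log2 (INR #|T|).
Definition Xi_max (T : finType) (P : T -> R) (d : R) : R :=
  entropy P + Rabs (entropy P - Hminf P d) + d * log2 (INR #|T|).

Definition margX (A B : finType) (P : A * B -> R) (a : A) : R :=
  \big[Rplus/0]_(b : B) P (a, b).
Definition margY (A B : finType) (P : A * B -> R) (b : B) : R :=
  \big[Rplus/0]_(a : A) P (a, b).
Definition swapP (A B : finType) (P : A * B -> R) (p : B * A) : R := P (p.2, p.1).

(* typical set A_delta(P_W) (w with P w > 0, so that -log P w is finite) *)
Definition inA (T : finType) (P : T -> R) (d : R) (w : T) : bool :=
  [&& Rltb 0 (P w), Rleb (Xi_min P d) (- log2 (P w)) & Rleb (- log2 (P w)) (Xi_max P d)].

Definition inA_joint (A B : finType) (P : A * B -> R) (d : R) (p : A * B) : bool :=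
  [&& inA P d p, inA (margX P) d p.1 & inA (margY P) d p.2].

Definition prob_notA (A B : finType) (P : A * B -> R) (d : R) : R :=
  \big[Rplus/0]_(p : A * B | ~~ inA_joint P d p) P p.

Definition in_Lambda (A B CX CY U : finType) (P : A * B -> R) (eps : R)
    (PU : U -> R) (eX : A * U -> CX) (eY : B * U -> CY) : Prop :=
  is_pmf PU /\
  exists g : CX -> CY -> U -> A * B,
    \big[Rplus/0]_(p : A * B) \big[Rplus/0]_(u : U | g (eX (p.1, u)) (eY (p.2, u)) u != p)
        (P p * PU u) <= eps.

(* Main.v *)
From HB Require Import structures.
Require Import Defs.
From mathcomp Require Import all_boot.
From Stdlib Require Import Reals Lra ClassicalEpsilon Classical.
Set Implicit Arguments. Unset Strict Implicit. Unset Printing Implicit Defensive.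
Open Scope R_scope.

HB.instance Definition _ := Monoid.isComLaw.Build R 0 Rplus (fun a b c => esym (Rplus_assoc a b c)) Rplus_comm Rplus_0_l.
HB.instance Definition _ := Monoid.isComLaw.Build R 1 Rmult (fun a b c => esym (Rmult_assoc a b c)) Rmult_comm Rmult_1_l.
HB.instance Definition _ := Monoid.isMulLaw.Build R 0 Rmult Rmult_0_l Rmult_0_r.
HB.instance Definition _ := Monoid.isAddLaw.Build R Rmult Rplus Rmult_plus_distr_r Rmult_plus_distr_l.

Lemma sum_le (I : finType) (Pr : pred I) (F G : I -> R) :
  (forall i, Pr i -> F i <= G i) ->
  \big[Rplus/0]_(i | Pr i) F i <= \big[Rplus/0]_(i | Pr i) G i.
Proof. move=> h; apply: (big_ind2 (fun a b => a <= b)) => //; [lra| move=> *; lra]. Qed.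

Lemma sum_ge0 (I : finType) (Pr : pred I) (F : I -> R) :
  (forall i, Pr i -> 0 <= F i) -> 0 <= \big[Rplus/0]_(i | Pr i) F i.
Proof. move=> h; apply: (big_ind (fun a => 0 <= a)) => //; [lra| move=> *; lra]. Qed.

Lemma sum_sub_le (I : finType) (Pr Qr : pred I) (F : I -> R) :
  (forall i, Pr i -> 0 <= F i) ->
  \big[Rplus/0]_(i | Pr i && Qr i) F i <= \big[Rplus/0]_(i | Pr i) F i.
Proof.
move=> h; rewrite [X in _ <= X](bigID Qr) /=.
have : 0 <= \big[Rplus/0]_(i | Pr i && ~~ Qr i) F i.
  by apply: sum_ge0 => i /andP [] /h.
lra.
Qed.

Lemma sum_const (I : finType) (A : pred I) (c : R) :
  \big[Rplus/0]_(i in A) c = INR #|A| * c.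
Proof.
rewrite -sum1_card.
rewrite (big_morph INR (fun a b => plus_INR a b) (erefl (INR 0))) big_distrl /=.
by apply: eq_bigr => i _; rewrite Rmult_1_l.
Qed.

Lemma sum_pos (I : finType) (F : I -> R) i0 :
  (forall i, 0 <= F i) -> 0 < F i0 -> 0 < \big[Rplus/0]_i F i.
Proof.
move=> h h0; rewrite (bigD1 i0) //=.
have : 0 <= \big[Rplus/0]_(i | i != i0) F i by apply: sum_ge0.
lra.
Qed.
Lemma ln_nonpos x : x <= 0 -> ln x = 0.
Proof. move=> h; unfold ln; case: Rlt_dec => // ?; exfalso; lra. Qed.

Lemma ln_le' x y : 0 < x -> x <= y -> ln x <= ln y.
Proof. move=> h [h'|<-]; [left; apply: ln_increasing|]; lra. Qed.

Lemma exp_le' x y : x <= y -> exp x <= exp y.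
Proof. move=> [h|<-]; [left; apply: exp_increasing|]; lra. Qed.

Lemma ln2_pos : 0 < ln 2.
Proof. have := ln_lt_2; lra. Qed.

Lemma log2_mono x y : 1 <= y -> x <= y -> log2 x <= log2 y.
Proof.
move=> h1 h2; rewrite /log2; have l2 : 0 < ln 2 by have := ln_lt_2; lra.
apply: Rmult_le_compat_r; first by left; apply: Rinv_0_lt_compat.
case: (Rle_lt_dec x 0) => hx.
  rewrite ln_nonpos //; rewrite -ln_1; apply: ln_le'; lra.
by apply: ln_le'.
Qed.

Lemma Rinf_le (E : R -> Prop) r : (forall x, E x -> 0 <= x) -> E r -> Rinf E <= r.
Proof.
move=> h0 hr.
have ex : exists m, is_glb E m.
  have [m [hm1 hm2]] : {m | is_lub (fun y => E (- y)) m}.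
    apply: completeness.
      by exists 0 => y /h0; lra.
    by exists (- r); rewrite Ropp_involutive.
  exists (- m); split.
    by move=> x hx; have := hm1 (- x); rewrite Ropp_involutive => /(_ hx); lra.
  move=> b hb; have : m <= - b.
    by apply: hm2 => y hy; have := hb _ hy; lra.
  lra.
have := epsilon_spec (inhabits 0) (is_glb E) ex.
rewrite -/(Rinf E) => [[h _]]; exact: h.
Qed.

Definition pw2 (t : R) : R := exp (t * ln 2).

Lemma pw2_pos t : 0 < pw2 t.
Proof. exact: exp_pos. Qed.

Lemma pw2_add a b : pw2 (a + b) = pw2 a * pw2 b.
Proof. by rewrite /pw2 -exp_plus Rmult_plus_distr_r. Qed.

Lemma pw2_log x : 0 < x -> pw2 (log2 x) = x.
Proof.
move=> h; rewrite /pw2 /log2 Rmult_assoc Rinv_l ?Rmult_1_r ?exp_ln //.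
have := ln2_pos; lra.
Qed.

Lemma pw2_opp a : pw2 (- a) = / pw2 a.
Proof. by rewrite /pw2 Ropp_mult_distr_l_reverse exp_Ropp. Qed.

Lemma pw2_le_of_log a b : 0 < a -> b <= log2 a -> pw2 b <= a.
Proof.
move=> ha hb; rewrite -(pw2_log ha); apply: exp_le'.
apply: Rmult_le_compat_r; [have := ln2_pos; lra|done].
Qed.

Lemma log2_le_pw2 a b : 0 < a -> log2 a <= b -> a <= pw2 b.
Proof.
move=> ha hb; rewrite -(pw2_log ha); apply: exp_le'.
apply: Rmult_le_compat_r; [have := ln2_pos; lra|done].
Qed.

Lemma log2_mult a b : 0 < a -> 0 < b -> log2 (a * b) = log2 a + log2 b.
Proof. by move=> ha hb; rewrite /log2 ln_mult // /Rdiv Rmult_plus_distr_r. Qed.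

Lemma RlebP x y : Rleb x y -> x <= y.
Proof. by rewrite /Rleb; case: Rle_dec. Qed.
Lemma RltbP x y : Rltb x y -> x < y.
Proof. by rewrite /Rltb; case: Rlt_dec. Qed.

Definition smQ (T : finType) (P : T -> R) (h : T -> T) (p : T * T) : R :=
  if p.2 == h p.1 then P p.1 else 0.

Lemma smQ_row (T : finType) (P : T -> R) (h : T -> T) w :
  \big[Rplus/0]_(w' : T) smQ P h (w, w') = P w.
Proof. by rewrite /smQ /= -big_mkcond /= big_pred1_eq. Qed.

Lemma smQ_smoothing (T : finType) (P : T -> R) (h : T -> T) e :
  is_pmf P -> \big[Rplus/0]_(w | h w != w) P w <= e -> smoothing P e (smQ P h).
Proof.
move=> [P0 P1] he; split; [split|split].
- by case=> w w'; rewrite /smQ; case: eqP => _ //; lra.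
- rewrite -P1 (eq_bigr (fun p => smQ P h (p.1, p.2))); last by case.
  rewrite -(pair_bigA _ (fun w w2 => smQ P h (w, w2))) /=; apply: eq_bigr => w _; exact: smQ_row.
- move=> w; exact: smQ_row.
- rewrite big_mkcond /= (eq_bigr (fun p => if p.1 != p.2 then smQ P h (p.1, p.2) else 0)); last by case.
  rewrite -(pair_bigA _ (fun w w2 => if w != w2 then smQ P h (w, w2) else 0)) /=.
  apply: Rle_trans he; right; rewrite [X in _ = X]big_mkcond /=; apply: eq_bigr => w _.
  rewrite /smQ /= (bigD1 (h w)) //= eqxx big1; last first.
    by move=> w' /negbTE ->; case: (w != w').
  by rewrite Rplus_0_r eq_sym.
Qed.

Lemma smQ_bar (T : finType) (P : T -> R) (h : T -> T) w' :
  Rltb 0 (bar_law (smQ P h) w') -> exists w, h w = w'.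
Proof.
move=> /RltbP hp; apply: NNPP => hn; move: hp; rewrite /bar_law big1; first lra.
move=> w _; rewrite /smQ /=; case: eqP => // e; exfalso; apply: hn; by exists w.
Qed.

Lemma INR_leq m n : leq m n -> INR m <= INR n.
Proof. by move/leP; apply: le_INR. Qed.

Lemma INR_ge1 n : leq 1 n -> 1 <= INR n.
Proof. by move/INR_leq. Qed.

Lemma H0cond_le (A B C : finType) (P : A * B -> R) e (h : A * B -> A * B)
    (f : C -> B -> A) :
  is_pmf P -> \big[Rplus/0]_(w | h w != w) P w <= e ->
  (forall w, exists c, h w = (f c w.2, w.2)) -> leq 1 #|C| ->
  H0cond P e <= log2 (INR #|C|).
Proof.
move=> hP he hh hC; rewrite /H0cond; apply: log2_mono; first exact: INR_ge1.
apply: Rle_trans (Rinf_le _ _) _.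
- by move=> x [Q [_ ->]]; apply: pos_INR.
- by exists (smQ P h); split; [apply: smQ_smoothing|].
- apply: INR_leq; apply/bigmax_leqP => b _; rewrite /cond_supp_size.
  apply: (@leq_trans #|(fun c => f c b) @: [set: C]|); last first.
    by apply: leq_trans (leq_imset_card _ _) _; rewrite cardsT.
  apply: subset_leq_card; apply/subsetP => a; rewrite inE => /smQ_bar [w hw].
  have [c hc] := hh w; rewrite hc in hw; case: hw => <- <-.
  by apply/imsetP; exists c; rewrite ?inE.
Qed.

Lemma H0_le (T C : finType) (P : T -> R) e (h : T -> T) (f : C -> T) :
  is_pmf P -> \big[Rplus/0]_(w | h w != w) P w <= e ->
  (forall w, exists c, h w = f c) -> leq 1 #|C| ->
  H0 P e <= log2 (INR #|C|).
Proof.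
move=> hP he hh hC; rewrite /H0; apply: log2_mono; first exact: INR_ge1.
apply: Rle_trans (Rinf_le _ _) _.
- by move=> x [Q [_ ->]]; apply: pos_INR.
- by exists (smQ P h); split; [apply: smQ_smoothing|].
- apply: INR_leq.
  apply: (@leq_trans #|f @: [set: C]|); last first.
    by apply: leq_trans (leq_imset_card _ _) _; rewrite cardsT.
  apply: subset_leq_card; apply/subsetP => a; rewrite inE => /smQ_bar [w hw].
  have [c hc] := hh w; rewrite hc in hw; subst a.
  by apply/imsetP; exists c; rewrite ?inE.
Qed.

Lemma sum_cond_le (I : finType) (a b : pred I) (F : I -> R) :
  (forall i, 0 <= F i) -> (forall i, a i -> b i) ->
  \big[Rplus/0]_(i | a i) F i <= \big[Rplus/0]_(i | b i) F i.
Proof.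
move=> h0 hab; rewrite big_mkcond [X in _ <= X]big_mkcond /=; apply: sum_le => i _.
case ha: (a i); first by rewrite hab //; lra.
by case: (b i); [apply: h0|lra].
Qed.

Lemma swap_sum (A B : finType) (Pr : pred (A * B)) (F : A * B -> R) :
  \big[Rplus/0]_(p : B * A | Pr (p.2, p.1)) F (p.2, p.1) =
  \big[Rplus/0]_(p : A * B | Pr p) F p.
Proof.
symmetry; apply: (reindex (fun p : B * A => (p.2, p.1))).
by apply: onW_bij; exists (fun p : A * B => (p.2, p.1)); case.
Qed.

Lemma pmf_pos (T : finType) (P : T -> R) : is_pmf P -> exists t, 0 < P t.
Proof.
move=> [h0 h1]; apply: NNPP => hn; move: h1; rewrite big1; first lra.
move=> t _; case: (h0 t) => // hp; exfalso; apply: hn; by exists t.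
Qed.

Lemma lower_part (X Y : finType) (P : X * Y -> R) (hP : is_pmf P) (eps : R)
  (CX CY U : finType) (PU : U -> R) (eX : X * U -> CX) (eY : Y * U -> CY) :
  in_Lambda P eps PU eX eY ->
     log2 (INR #|CX|) >= H0cond P eps /\
     log2 (INR #|CY|) >= H0cond (swapP P) eps /\
     log2 (INR #|CX|) + log2 (INR #|CY|) >= H0 P eps.
Proof.
move=> [hPU [g hg]].
set err := fun p u => g (eX (p.1, u)) (eY (p.2, u)) u != p.
have [u0 hu0] : exists u0, \big[Rplus/0]_(p | err p u0) P p <= eps.
  apply: NNPP => hn.
  have hs : forall u, eps < \big[Rplus/0]_(p | err p u) P p.
    move=> u; apply: Rnot_le_lt => hu; apply: hn; by exists u.
  have [u1 hu1] := pmf_pos hPU.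
  have : 0 < \big[Rplus/0]_u (PU u * (\big[Rplus/0]_(p | err p u) P p - eps)).
    apply: (sum_pos (i0:=u1)).
      move=> u; apply: Rmult_le_pos; first by case: hPU.
      by have := hs u; lra.
    by apply: Rmult_lt_0_compat => //; have := hs u1; lra.
  move=> hpos.
  have e1 : \big[Rplus/0]_u (PU u * (\big[Rplus/0]_(p | err p u) P p - eps)) +
      \big[Rplus/0]_u (eps * PU u) =
      \big[Rplus/0]_u (\big[Rplus/0]_(p | err p u) (P p * PU u)).
    rewrite -big_split; apply: eq_bigr => u _ /=; rewrite -big_distrl /=; ring.
  have e2 : \big[Rplus/0]_u (eps * PU u) = eps.
    rewrite -big_distrr /=; case: hPU => _ ->; ring.
  have hx : \big[Rplus/0]_u (\big[Rplus/0]_(p | err p u) (P p * PU u)) =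
      \big[Rplus/0]_p (\big[Rplus/0]_(u | err p u) (P p * PU u)).
    rewrite (eq_bigr (fun u => \big[Rplus/0]_p (if err p u then P p * PU u else 0))); last first.
      by move=> u _; rewrite big_mkcond.
    by rewrite exchange_big; apply: eq_bigr => p _; rewrite [RHS]big_mkcond.
  have hg2 : \big[Rplus/0]_p (\big[Rplus/0]_(u | err p u) (P p * PU u)) <= eps := hg.
  rewrite -hx -e1 e2 in hg2; lra.
set d := fun p => g (eX (p.1, u0)) (eY (p.2, u0)) u0.
have [p0 _] := pmf_pos hP.
have hCX : leq 1 #|CX| by apply/card_gt0P; exists (eX (p0.1, u0)).
have hCY : leq 1 #|CY| by apply/card_gt0P; exists (eY (p0.2, u0)).
have P0 := proj1 hP.
split; [|split].
- apply: Rle_ge; apply: (H0cond_le (h := fun w => ((d w).1, w.2))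
     (f := fun c y => (g c (eY (y, u0)) u0).1)) => //.
  + apply: Rle_trans hu0; apply: sum_cond_le => // w.
    by apply: contraNN => /eqP hw; apply/eqP; case: w hw => [x y] hw; rewrite /d /= hw.
  + by case=> x y; exists (eX (x, u0)).
- apply: Rle_ge; apply: (H0cond_le (h := fun w : Y * X => ((d (w.2, w.1)).2, w.2))
     (f := fun c x => (g (eX (x, u0)) c u0).2)) => //.
  + split; first by move=> t; apply: P0.
    rewrite /swapP -(proj2 hP); exact: (swap_sum xpredT P).
  + apply: Rle_trans hu0; rewrite -(swap_sum (fun p => err p u0)).
    apply: sum_cond_le => [w|w]; first exact: P0.
    by apply: contraNN => /eqP hw; apply/eqP; case: w hw => [y x] hw; rewrite /d /= hw.
  + by case=> y x; exists (eY (y, u0)).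
- rewrite -log2_mult; last 2 first.
    by apply: lt_0_INR; apply/ltP.
    by apply: lt_0_INR; apply/ltP.
  have -> : INR #|CX| * INR #|CY| = INR #|{: CX * CY}|.
    by rewrite card_prod -multE mult_INR.
  apply: Rle_ge; apply: (H0_le (h := d) (f := fun c : CX * CY => g c.1 c.2 u0)) => //.
  + by move=> w; exists (eX (w.1, u0), eY (w.2, u0)).
  + by rewrite card_prod muln_gt0 hCX hCY.
Qed.

Definition upd (T C : finType) (g : {ffun T -> C}) (a : T) (v : C) : {ffun T -> C} :=
  [ffun z => if z == a then v else g z].

Lemma card_coll (T C : finType) (x x' : T) : x != x' ->
  muln #|[set f : {ffun T -> C} | f x == f x']| #|C| = #|{: {ffun T -> C}}|.
Proof.
move=> nx.
pose h := fun f : {ffun T -> C} => (upd f x' (f x), f x').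
have hinj : injective h.
  move=> f1 f2 [e1 e2]; apply/ffunP => z.
  case: (eqVneq z x') => [->|nz] //.
  have := congr1 (fun g : {ffun T -> C} => g z) e1; rewrite /upd !ffunE (negbTE nz) //.
rewrite -[RHS]cardsT -[RHS](card_imset _ hinj).
have -> : h @: [set: {ffun T -> C}] = setX [set f : {ffun T -> C} | f x == f x'] [set: C].
  apply/setP => [[g c]]; rewrite !inE andbT; apply/imsetP/idP.
  - move=> [f _ [-> _]]; rewrite /upd !ffunE eqxx (negbTE nx) //.
  - move=> /eqP hg; exists (upd g x' c); rewrite ?inE //.
    rewrite /h /upd !ffunE eqxx (negbTE nx); congr (_, _).
    apply/ffunP => z; rewrite !ffunE; case: (eqVneq z x') => [->|//].
    by rewrite hg.
by rewrite cardsX cardsT.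
Qed.

Lemma inA_lo (T : finType) (P : T -> R) d w :
  inA P d w -> 1 <= P w * pw2 (Xi_max P d).
Proof.
case/and3P => /RltbP h0 _ /RlebP h2.
have := pw2_le_of_log (b := - Xi_max P d) h0 ltac:(lra).
rewrite pw2_opp => h; have hp := pw2_pos (Xi_max P d).
apply: (Rmult_le_reg_r (/ pw2 (Xi_max P d))); first by apply: Rinv_0_lt_compat.
rewrite Rmult_assoc Rinv_r; lra.
Qed.

Lemma inA_hi (T : finType) (P : T -> R) d w :
  inA P d w -> P w * pw2 (Xi_min P d) <= 1.
Proof.
case/and3P => /RltbP h0 /RlebP h1 _.
have := log2_le_pw2 (b := - Xi_min P d) h0 ltac:(lra).
rewrite pw2_opp => h; have hp := pw2_pos (Xi_min P d).
apply: (Rmult_le_reg_r (/ pw2 (Xi_min P d))); first by apply: Rinv_0_lt_compat.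
rewrite Rmult_assoc Rinv_r; lra.
Qed.

Definition rX (T C : finType) (a b : T) : R :=
  INR #|[set f : {ffun T -> C} | f a == f b]| / INR #|{: {ffun T -> C}}|.
Arguments rX : clear implicits.

Lemma cardF_pos (T C : finType) : leq 1 #|C| -> 0 < INR #|{: {ffun T -> C}}|.
Proof.
move=> hC; apply: lt_0_INR; apply/ltP; rewrite card_ffun expn_gt0.
by move: hC; case: #|C|.
Qed.

Lemma rX_ge0 (T C : finType) a b : leq 1 #|C| -> 0 <= rX T C a b.
Proof.
move=> hC; rewrite /rX; apply: Rmult_le_pos; first exact: pos_INR.
by left; apply: Rinv_0_lt_compat; apply: cardF_pos.
Qed.

Lemma rX_le1 (T C : finType) a b : leq 1 #|C| -> rX T C a b <= 1.
Proof.
move=> hC; rewrite /rX; have hF := cardF_pos T hC.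
apply: (Rmult_le_reg_r (INR #|{: {ffun T -> C}}|)) => //.
rewrite /Rdiv Rmult_assoc Rinv_l ?Rmult_1_r ?Rmult_1_l; last lra.
apply: INR_leq; rewrite -cardsT; apply: subset_leq_card; apply/subsetP => f; by rewrite inE.
Qed.

Lemma rX_neq (T C : finType) a b : leq 1 #|C| -> a != b -> rX T C a b = / INR #|C|.
Proof.
move=> hC nab; rewrite /rX -(card_coll C nab) mult_INR.
have : 0 < INR #|C| by apply: lt_0_INR; apply/ltP.
have : 0 < INR #|[set f : {ffun T -> C} | f a == f b]|.
  apply: lt_0_INR; apply/ltP; apply/card_gt0P.
  have [c _] : exists c : C, c \in C by apply/card_gt0P.
  by exists [ffun => c]; rewrite inE !ffunE.
move=> h1 h2; field; lra.
Qed.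

Lemma sum_ind (I : finType) (c : pred I) :
  \big[Rplus/0]_i (if c i then 1 else 0) = INR #|[set i | c i]|.
Proof.
rewrite -big_mkcond (eq_bigl (fun i => i \in [set i | c i])); last by move=> i; rewrite inE.
by rewrite sum_const Rmult_1_r.
Qed.

Definition coll (X Y CX CY : finType) (q p : X * Y)
   (u : {ffun X -> CX} * {ffun Y -> CY}) : bool :=
  (u.1 q.1 == u.1 p.1) && (u.2 q.2 == u.2 p.2).

Lemma field_aux (a b c d a' b' : R) : a = a' -> b = b' -> 0 < a -> 0 < b ->
  / (a * b) * (c * d) = c / a' * (d / b').
Proof. move=> <- <- ha hb; field; lra. Qed.

Lemma coll_prob (X Y CX CY : finType) (q p : X * Y) :
  leq 1 #|CX| -> leq 1 #|CY| ->
  \big[Rplus/0]_(u : {ffun X -> CX} * {ffun Y -> CY})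
     (/ INR #|{: {ffun X -> CX} * {ffun Y -> CY}}| * (if coll q p u then 1 else 0))
  = rX X CX q.1 p.1 * rX Y CY q.2 p.2.
Proof.
move=> hX hY; rewrite -big_distrr sum_ind.
have -> : [set u | coll q p u] =
   setX [set f : {ffun X -> CX} | f q.1 == f p.1] [set f : {ffun Y -> CY} | f q.2 == f p.2].
  by apply/setP => [[f1 f2]]; rewrite !inE.
rewrite cardsX card_prod !mult_INR /rX.
have := cardF_pos X hX; have := cardF_pos Y hY => h1 h2.
by apply: field_aux.
Qed.

Lemma rr_bound (X Y CX CY : finType) (q p : X * Y) :
  leq 1 #|CX| -> leq 1 #|CY| -> q != p ->
  rX X CX q.1 p.1 * rX Y CY q.2 p.2 <=
  (if q.1 == p.1 then 1 else 0) * / INR #|CY| +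
  (if q.2 == p.2 then 1 else 0) * / INR #|CX| + / INR #|CX| * / INR #|CY|.
Proof.
move=> hX hY; case: q p => [x' y'] [x y] /= nq.
have a1 := @rX_le1 X CX x' x hX; have a0 := @rX_ge0 X CX x' x hX.
have b1 := @rX_le1 Y CY y' y hY; have b0 := @rX_ge0 Y CY y' y hY.
have kX : 0 < / INR #|CX| by apply: Rinv_0_lt_compat; apply: lt_0_INR; apply/ltP.
have kY : 0 < / INR #|CY| by apply: Rinv_0_lt_compat; apply: lt_0_INR; apply/ltP.
have f1 : forall iX iY a : R, 0 < iX -> 0 < iY -> a <= 1 ->
   a * iY <= 1 * iY + 0 * iX + iX * iY by move=> *; nra.
have f2 : forall iX iY b : R, 0 < iX -> 0 < iY -> b <= 1 ->
   iX * b <= 0 * iY + 1 * iX + iX * iY by move=> *; nra.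
have f3 : forall iX iY : R, 0 < iX -> 0 < iY ->
   iX * iY <= 0 * iY + 0 * iX + iX * iY by move=> *; nra.
case: (eqVneq x' x) => [ex|nx]; case: (eqVneq y' y) => [ey|ny].
- by move: nq; rewrite ex ey eqxx.
- by rewrite (@rX_neq Y CY y' y hY ny); apply: f1.
- by rewrite (@rX_neq X CX x' x hX nx); apply: f2.
- by rewrite (@rX_neq X CX x' x hX nx) (@rX_neq Y CY y' y hY ny); apply: f3.
Qed.

Lemma margY_sum (X Y : finType) (P : X * Y -> R) y :
  \big[Rplus/0]_q (if q.2 == y then P q else 0) = margY P y.
Proof.
rewrite (eq_bigr (fun q => (fun a b => if b == y then P (a, b) else 0) q.1 q.2)); last by case.
rewrite -(pair_bigA _ (fun a b => if b == y then P (a, b) else 0)) /margY.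
by apply: eq_bigr => x _; rewrite -big_mkcond big_pred1_eq.
Qed.

Lemma margX_sum (X Y : finType) (P : X * Y -> R) x :
  \big[Rplus/0]_q (if q.1 == x then P q else 0) = margX P x.
Proof.
rewrite (eq_bigr (fun q => (fun a b => if a == x then P (a, b) else 0) q.1 q.2)); last by case.
rewrite -(pair_bigA _ (fun a b => if a == x then P (a, b) else 0)) /margX.
rewrite (eq_bigr (fun a => if a == x then \big[Rplus/0]_b P (a, b) else 0)).
  by rewrite -big_mkcond big_pred1_eq.
move=> a _; case: eqP => // _; by rewrite big1.
Qed.

Lemma cnt_gen (T : finType) (P : T -> R) d (S : pred T) (c : pred T) :
  (forall q, 0 <= P q) -> (forall q, S q -> inA P d q) ->
  \big[Rplus/0]_(q | S q) (if c q then 1 else 0) <=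
  pw2 (Xi_max P d) * \big[Rplus/0]_q (if c q then P q else 0).
Proof.
move=> hP0 hS; apply: Rle_trans (_ : \big[Rplus/0]_(q | S q) (pw2 (Xi_max P d) * (if c q then P q else 0)) <= _).
  apply: sum_le => q hq; case: (c q); last lra.
  by have := inA_lo (hS q hq); lra.
rewrite -big_distrr; apply: Rmult_le_compat_l; first by left; apply: pw2_pos.
apply: (sum_cond_le (b := xpredT)) => // q; case: (c q) => //; lra.
Qed.

Lemma cond_bound a k e : 0 < k -> 0 < e -> log2 k >= a - log2 e -> pw2 a <= e * k.
Proof.
move=> hk he h; have := pw2_le_of_log (b := a + - log2 e) hk ltac:(lra).
rewrite pw2_add pw2_opp pw2_log // => h2.
apply: (Rmult_le_reg_r (/ e)); first by apply: Rinv_0_lt_compat.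
rewrite (Rmult_comm e) Rmult_assoc Rinv_r ?Rmult_1_r //; lra.
Qed.

Lemma sum_constT (I : finType) (c : R) : \big[Rplus/0]_(i : I) c = INR #|I| * c.
Proof.
rewrite (eq_bigl (fun i => i \in [set: I])); last by move=> i; rewrite inE.
by rewrite sum_const cardsT.
Qed.

Lemma INR_pos_leq1 n : 0 < INR n -> leq 1 n.
Proof. by case: n => [/= h|//]; lra. Qed.

Lemma arith1 (s A m pm k e : R) : 0 < A -> 0 < pm -> 0 < k ->
  s <= A * m -> m * pm <= 1 -> A * / pm <= e * k -> s * / k <= e.
Proof.
move=> hA hpm hk h1 h2 h3.
have hm : m <= / pm.
  apply: (Rmult_le_reg_r pm) => //; rewrite Rinv_l; lra.
have : s <= e * k by apply: Rle_trans h1 _; apply: Rle_trans h3; apply: Rmult_le_compat_l; lra.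
move=> h4; apply: (Rmult_le_reg_r k) => //; rewrite Rmult_assoc Rinv_l; lra.
Qed.

Lemma arith2 (s A k1 k2 e : R) : 0 < k1 -> 0 < k2 -> s <= A -> A <= e * (k1 * k2) ->
  s * (/ k1 * / k2) <= e.
Proof.
move=> h1 h2 hs hA; rewrite -Rinv_mult.
have hk : 0 < k1 * k2 by apply: Rmult_lt_0_compat.
apply: (Rmult_le_reg_r (k1 * k2)) => //; rewrite Rmult_assoc Rinv_l; lra.
Qed.

Lemma upper_part (X Y : finType) (P : X * Y -> R) (hP : is_pmf P) (eps e0 e1 e2 e3 : R)
  (he1 : 0 < e1) (he2 : 0 < e2) (he3 : 0 < e3) (hsum : e0 + e1 + e2 + e3 <= eps)
  (delta : R) (hA : prob_notA P delta <= e0) (CX CY : finType)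
  (hCX : 0 < INR #|CX|) (hCY : 0 < INR #|CY|)
  (c1 : log2 (INR #|CX|) >= Xi_max P delta - Xi_min (margY P) delta - log2 e1)
  (c2 : log2 (INR #|CY|) >= Xi_max P delta - Xi_min (margX P) delta - log2 e2)
  (c3 : log2 (INR #|CX|) + log2 (INR #|CY|) >= Xi_max P delta - log2 e3) :
  exists (U : finType) (PU : U -> R) (eX : X * U -> CX) (eY : Y * U -> CY),
    in_Lambda P eps PU eX eY.
Proof.
have hX := INR_pos_leq1 hCX; have hY := INR_pos_leq1 hCY.
have b1 := cond_bound hCX he1 c1.
have b2 := cond_bound hCY he2 c2.
rewrite -log2_mult // in c3.
have b3 := cond_bound (Rmult_lt_0_compat _ _ hCX hCY) he3 c3.
rewrite /Rminus pw2_add pw2_opp in b1.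
rewrite /Rminus pw2_add pw2_opp in b2.
have [p0 _] := pmf_pos hP.
have P0 := proj1 hP.
pose U := ({ffun X -> CX} * {ffun Y -> CY})%type.
pose TA := fun p => inA_joint P delta p.
have hS : forall q, TA q -> inA P delta q by move=> q /and3P [].
pose g := fun (cx : CX) (cy : CY) (u : U) =>
   if [pick q | TA q && (u.1 q.1 == cx) && (u.2 q.2 == cy)] is Some q then q else p0.
have hU : 0 < INR #|{: U}|.
  rewrite card_prod mult_INR; apply: Rmult_lt_0_compat; exact: cardF_pos.
set c := / INR #|{: U}|.
have hc : 0 < c by apply: Rinv_0_lt_compat.
have hPU : is_pmf (fun _ : U => c).
  split; first by move=> _; lra.
  rewrite sum_constT /c; apply: Rinv_r; exact: (Rgt_not_eq _ _ hU).
have Ep : forall p, \big[Rplus/0]_(u : U | g (u.1 p.1) (u.2 p.2) u != p) c <=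
                    if TA p then e1 + e2 + e3 else 1.
  move=> p; case hT: (TA p); last first.
    apply: Rle_trans (_ : \big[Rplus/0]_(u : U) c <= _).
      by apply: sum_cond_le => // _; lra.
    by case: hPU => _ ->; lra.
  set M := Xi_max P delta.
  have cnt : forall cc : pred (X * Y),
      \big[Rplus/0]_(q | TA q) (if cc q then 1 else 0) <=
      pw2 M * \big[Rplus/0]_q (if cc q then P q else 0).
    by move=> cc; apply: cnt_gen.
  apply: Rle_trans (_ : \big[Rplus/0]_(u : U)
      (c * \big[Rplus/0]_(q | TA q && (q != p)) (if coll q p u then 1 else 0)) <= _).
    rewrite big_mkcond; apply: sum_le => u _.
    have S0 : 0 <= \big[Rplus/0]_(q | TA q && (q != p)) (if coll q p u then 1 else 0).
      by apply: sum_ge0 => q _; case: (coll q p u); lra.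
    case: ifP => herr; last by apply: Rmult_le_pos; lra.
    have [q [hq1 hq2 hq3]] : exists q, [/\ TA q, q != p & coll q p u].
      move: herr; rewrite /g; case: pickP => [q /andP [/andP [hq hb1] hb2] hqp | hn].
        by exists q; split => //; rewrite /coll hb1 hb2.
      by have := hn p; rewrite hT !eqxx.
    have S1 : 1 <= \big[Rplus/0]_(q | TA q && (q != p)) (if coll q p u then 1 else 0).
      rewrite (bigD1 q) /=; last by rewrite hq1 hq2.
      rewrite hq3.
      have : 0 <= \big[Rplus/0]_(i | (TA i && (i != p)) && (i != q)) (if coll i p u then 1 else 0).
        by apply: sum_ge0 => i _; case: (coll i p u); lra.
      move=> hh; apply: (Rle_trans _ (1 + 0)); [lra | exact: Rplus_le_compat_l].
    have := Rmult_le_compat_l _ _ _ (Rlt_le _ _ hc) S1; lra.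
  rewrite (eq_bigr (fun u => \big[Rplus/0]_(q | TA q && (q != p))
      (c * (if coll q p u then 1 else 0)))); last by move=> u _; rewrite big_distrr.
  rewrite exchange_big.
  rewrite (eq_bigr (fun q => rX X CX q.1 p.1 * rX Y CY q.2 p.2)); last first.
    by move=> q _; apply: coll_prob.
  pose B := fun q : X * Y => (if q.1 == p.1 then 1 else 0) * / INR #|CY| +
     (if q.2 == p.2 then 1 else 0) * / INR #|CX| + / INR #|CX| * / INR #|CY|.
  apply: Rle_trans (_ : \big[Rplus/0]_(q | TA q && (q != p)) B q <= _).
    apply: sum_le => q /andP [_ hq]; exact: rr_bound.
  have iX : 0 < / INR #|CX| by apply: Rinv_0_lt_compat.
  have iY : 0 < / INR #|CY| by apply: Rinv_0_lt_compat.
  have B0 : forall q, 0 <= B q.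
    move=> q; rewrite /B; have := Rmult_lt_0_compat _ _ iX iY.
    by case: (q.1 == p.1); case: (q.2 == p.2); lra.
  apply: Rle_trans (@sum_sub_le _ TA (fun q => q != p) B (fun q _ => B0 q)) _.
  have [_ hpX hpY] := and3P hT.
  have t1 : \big[Rplus/0]_(q | TA q) (if q.1 == p.1 then 1 else 0) * / INR #|CY| <= e2.
    apply: (arith1 (A := pw2 M) (m := margX P p.1) (pm := pw2 (Xi_min (margX P) delta))).
    - exact: pw2_pos.
    - exact: pw2_pos.
    - exact: hCY.
    - by rewrite -margX_sum; apply: cnt.
    - exact: inA_hi.
    - exact: b2.
  have t2 : \big[Rplus/0]_(q | TA q) (if q.2 == p.2 then 1 else 0) * / INR #|CX| <= e1.
    apply: (arith1 (A := pw2 M) (m := margY P p.2) (pm := pw2 (Xi_min (margY P) delta))).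
    - exact: pw2_pos.
    - exact: pw2_pos.
    - exact: hCX.
    - by rewrite -margY_sum; apply: cnt.
    - exact: inA_hi.
    - exact: b1.
  have t3 : \big[Rplus/0]_(q | TA q) 1 * (/ INR #|CX| * / INR #|CY|) <= e3.
    apply: (arith2 (A := pw2 M)) => //.
    have := cnt xpredT; rewrite /= (proj2 hP) Rmult_1_r; exact.
  have -> : \big[Rplus/0]_(q | TA q) B q =
    \big[Rplus/0]_(q | TA q) (if q.1 == p.1 then 1 else 0) * / INR #|CY| +
    \big[Rplus/0]_(q | TA q) (if q.2 == p.2 then 1 else 0) * / INR #|CX| +
    \big[Rplus/0]_(q | TA q) 1 * (/ INR #|CX| * / INR #|CY|).
    rewrite /B !big_split [in RHS]big_distrl [in RHS]big_distrl [in RHS]big_distrl.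
    rewrite [X in _ = _ + X](eq_bigr (fun q => / INR #|CX| * / INR #|CY|)); last by move=> *; exact: Rmult_1_l.
    reflexivity.
  lra.
exists U, (fun _ => c), (fun xu : X * U => xu.2.1 xu.1), (fun yu : Y * U => yu.2.2 yu.1).
split => //; exists g.
apply: Rle_trans (_ : \big[Rplus/0]_p (P p * (if TA p then e1 + e2 + e3 else 1)) <= _).
  apply: sum_le => p _; rewrite -big_distrr; exact: Rmult_le_compat_l (P0 p) (Ep p).
rewrite (bigID TA) /=.
rewrite (eq_bigr (fun p => P p * (e1 + e2 + e3))); last by move=> p ->.
rewrite [X in _ + X <= _](eq_bigr (fun p => P p)); last by move=> p /negbTE ->; ring.
have hA' : \big[Rplus/0]_(p | ~~ TA p) P p <= e0 := hA.
have hs1 : \big[Rplus/0]_(p | TA p) P p <= 1.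
  rewrite -(proj2 hP); exact: sum_cond_le.
have hs0 : 0 <= \big[Rplus/0]_(p | TA p) P p by apply: sum_ge0.
have : \big[Rplus/0]_(p | TA p) (P p * (e1 + e2 + e3)) <= 1 * (e1 + e2 + e3).
  rewrite -big_distrl; apply: Rmult_le_compat_r => //; lra.
move=> hh; apply: (Rle_trans _ (1 * (e1 + e2 + e3) + e0)); first by apply: Rplus_le_compat.
lra.
Qed.

Theorem theorem1 (X Y : finType) (P : X * Y -> R) (hP : is_pmf P)
  (eps e0 e1 e2 e3 : R) (heps : 0 < eps) (heps1 : eps <= 1)
  (he0 : 0 < e0) (he1 : 0 < e1) (he2 : 0 < e2) (he3 : 0 < e3)
  (hsum : e0 + e1 + e2 + e3 <= eps) :
  (forall (CX CY U : finType) (PU : U -> R) (eX : X * U -> CX) (eY : Y * U -> CY),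
     in_Lambda P eps PU eX eY ->
     log2 (INR #|CX|) >= H0cond P eps /\
     log2 (INR #|CY|) >= H0cond (swapP P) eps /\
     log2 (INR #|CX|) + log2 (INR #|CY|) >= H0 P eps) /\
  (forall delta : R, 0 <= delta -> prob_notA P delta <= e0 ->
   forall CX CY : finType, 0 < INR #|CX| -> 0 < INR #|CY| ->
     log2 (INR #|CX|) >= Xi_max P delta - Xi_min (margY P) delta - log2 e1 ->
     log2 (INR #|CY|) >= Xi_max P delta - Xi_min (margX P) delta - log2 e2 ->
     log2 (INR #|CX|) + log2 (INR #|CY|) >= Xi_max P delta - log2 e3 ->
     exists (U : finType) (PU : U -> R) (eX : X * U -> CX) (eY : Y * U -> CY),
       in_Lambda P eps PU eX eY).
Proof.
split.
- by move=> CX CY U PU eX eY; apply: lower_part.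
- move=> delta _ hA CX CY hCX hCY c1 c2 c3.
  exact: (upper_part hP he1 he2 he3 hsum hA hCX hCY c1 c2 c3).
Qed.
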